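(* Let $D$ be an integral domain with an identity element and let $\varphi$ be the canonical homomorphism of $D_{mult}$ onto $D'=D_{mult}/\sim$. For every ideal $I$ of $D_{mult}$, $\varphi(\mathrm{Sep}\,I)=\mathrm{Sep}(\varphi(I))$.
   Context: $D_{mult}$ is the multiplicative semigroup of $D$ and $\sim$ the associate congruence. For a subset $A$ of a semigroup $S$: $\mathrm{Id}\,A=\{x\in S: xA\subseteq A,\ Ax\subseteq A\}$ and $\mathrm{Sep}\,A=\mathrm{Id}\,A\cap\mathrm{Id}(S\setminus A)$; $\mathrm{Sep}\,I$ is taken in $D_{mult}$, and $\mathrm{Sep}(\varphi(I))$ in $D'$. *)

(* Defs.v *)
From HB Require Import structures.
From mathcomp Require Import all_boot all_algebra.
From mathcomp Require Import boolp classical_sets.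
Set Implicit Arguments. Unset Strict Implicit. Unset Printing Implicit Defensive.
Import GRing.Theory.
Local Open Scope ring_scope.
Local Open Scope classical_set_scope.
Local Open Scope quotient_scope.

Definition IdS (S : Type) (op : S -> S -> S) (A : set S) : set S :=
  [set x | forall a, A a -> A (op x a) /\ A (op a x)].

Definition SepS (S : Type) (op : S -> S -> S) (A : set S) : set S :=
  IdS op A `&` IdS op (~` A).

Definition is_sg_ideal (S : Type) (op : S -> S -> S) (I : set S) : Prop :=
  forall x a, I a -> I (op x a) /\ I (op a x).

Section Assoc.
Variable D : idomainType.

Definition assocP (a b : D) : Prop := exists2 u : D, u \is a GRing.unit & a = u * b.
Definition assoc : rel D := fun a b => `[< assocP a b >].

Lemma assoc_refl : reflexive assoc.
Proof. by move=> a; apply/asboolP; exists 1; rewrite ?unitr1 ?mul1r. Qed.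

Lemma assoc_sym : symmetric assoc.
Proof.
suff H : forall a b, assoc a b -> assoc b a.
  by move=> a b; apply/idP/idP; apply: H.
move=> a b /asboolP [u Uu ->]; apply/asboolP; exists u^-1; rewrite ?unitrV //.
by rewrite mulrA mulVr ?mul1r.
Qed.

Lemma assoc_trans : transitive assoc.
Proof.
move=> b a c /asboolP [u Uu ->] /asboolP [v Uv ->]; apply/asboolP.
by exists (u * v); rewrite ?unitrM ?Uu ?Uv // mulrA.
Qed.

Definition assoc_equiv : equiv_rel D := EquivRel assoc assoc_refl assoc_sym assoc_trans.

Definition Dquot := {eq_quot assoc_equiv}.

Definition phi : D -> Dquot := \pi_Dquot.

(* multiplication on D' induced by that of D (well defined since ~ is a
   congruence): [a][b] = [ab] *)
Definition Dquot_mul (x y : Dquot) : Dquot := phi (repr x * repr y).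

End Assoc.

(* Main.v *)
Require Import Defs.
From HB Require Import structures.
From mathcomp Require Import all_boot all_algebra.
From mathcomp Require Import boolp classical_sets.
Local Open Scope classical_set_scope.
Local Open Scope quotient_scope.
Set Implicit Arguments. Unset Strict Implicit.
Import GRing.Theory.
Local Open Scope ring_scope.

Lemma phiE (D : idomainType) (a b : D) : phi a = phi b -> assoc a b.
Proof. by rewrite /phi => /eqmodP. Qed.

Lemma reprphi (D : idomainType) (a : D) : exists2 u : D, u \is a GRing.unit & repr (phi a) = u * a.
Proof.
have /phiE /asboolP [u Uu E] : phi (repr (phi a)) = phi a by rewrite /phi reprK.
by exists u.
Qed.

Lemma phirepr (D : idomainType) (x : Dquot D) : phi (repr x) = x.
Proof. by rewrite /phi reprK. Qed.

Lemma sat (D : idomainType) (I : set D) : is_sg_ideal (@GRing.mul D) I ->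
  forall a, ((@phi D) @` I) (phi a) <-> I a.
Proof.
move=> HI a; split; last by move=> Ia; exists a.
case=> b Ib /phiE /asboolP [u Uu E].
have -> : a = u^-1 * b by rewrite E mulrA mulVr ?mul1r.
exact: (HI _ _ Ib).1.
Qed.

Lemma unitI (D : idomainType) (I : set D) : is_sg_ideal (@GRing.mul D) I ->
  forall u a, u \is a GRing.unit -> I (u * a) <-> I a.
Proof.
move=> HI u a Uu; split; last by move=> Ia; exact: (HI _ _ Ia).1.
move=> H; have := (HI u^-1 _ H).1; by rewrite mulrA mulVr ?mul1r.
Qed.

Theorem lemma4 (D : idomainType) (I : set D) :
  is_sg_ideal (@GRing.mul D) I ->
  (@phi D) @` (SepS (@GRing.mul D) I) = SepS (@Dquot_mul D) ((@phi D) @` I).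
Proof.
move=> HI; have S := sat HI; have U := unitI HI.
have inI : forall z : Dquot D, ((@phi D) @` I) z <-> I (repr z).
  by move=> z; rewrite -{1}(phirepr z) S.
apply/seteqP; split.
- move=> _ [x [_ Hx] <-]; split.
    move=> z Hz; rewrite /Dquot_mul !S.
    have Iz := (inI z).1 Hz.
    by split; [exact: (HI _ _ Iz).1 | exact: (HI _ _ Iz).2].
  move=> z Hz; have nz : ~ I (repr z) by move=> /(inI z).
  have [h1 h2] := Hx _ nz.
  rewrite /Dquot_mul; have [u Uu ->] := reprphi x.
  split=> /S H.
    by apply: h1; move: H; rewrite -mulrA U.
  by apply: h2; move: H; rewrite mulrCA U.
- move=> y [_ Hy]; exists (repr y); last exact: phirepr.
  split.
    by move=> a Ia; split; [exact: (HI _ _ Ia).1 | exact: (HI _ _ Ia).2].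
  move=> a na; have nz : ~ ((@phi D) @` I) (phi a) by move=> /S.
  have [h1 h2] := Hy _ nz.
  move: h1 h2; rewrite /Dquot_mul; have [u Uu ->] := reprphi a.
  move=> h1 h2; split=> Ia.
    by apply: h1; apply/S; rewrite mulrCA U.
  by apply: h2; apply/S; rewrite -mulrA U.
Qed.
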